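(* Let $R\subseteq S$, $\sigma$ be as in the context. Let $a_1,\ldots,a_\ell\in S$ be such that $a_i-a_j^\beta\in S^*$ for all $\beta\in S^*$ and all $1\le i<j\le\ell$. For $i=1,\ldots,\ell$, let $\mathbf{u}_i=(u_{i,1},\ldots,u_{i,n_i})\in S^{n_i}$ and $t_i={\rm rk}(\mathbf{u}_i)$, and set $t=t_1+\cdots+t_\ell$. Then there exists a monic skew polynomial $F\in S[x;\sigma]$ with $\deg(F)=t$ and $F_{a_i}(u_{i,j})=0$ for all $1\le j\le n_i$ and $1\le i\le\ell$.
   Context: $R$ is a finite commutative chain ring with maximal ideal $\mathfrak{m}$, $q=|R/\mathfrak{m}|$; $S=R[x]/(h)$ with $h$ monic of degree $m$ irreducible modulo $\mathfrak{m}$, local with maximal ideal $\mathfrak{M}=\mathfrak{m}S$ and unit group $S^*=S\setminus\mathfrak{M}$. $\sigma$ is a ring automorphism of $S$ generating the Galois group of $R\subseteq S$, with fixed ring $R$, reducing modulo $\mathfrak{M}$ to $y\mapsto y^q$. $S[x;\sigma]$ is the skew polynomial ring with $xa=\sigma(a)x$. For $a,\beta\in S$: $N_i(a)=\sigma^{i-1}(a)\cdots\sigma(a)a$, $\mathcal{D}_a^i(\beta)=\sigma^i(\beta)N_i(a)$, and for $F=\sum_iF_ix^i$, $F_a(\beta)=\sum_iF_i\mathcal{D}_a^i(\beta)$. For $\beta\in S^*$, $a^\beta=\sigma(\beta)a\beta^{-1}$. Rank: for $\mathbf{u}\in S^s$, fix an $R$-basis $\alpha_1,\ldots,\alpha_m$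 of $S$ and write $\mathbf{u}=\sum_{i=1}^m\alpha_i(c_{i,1},\ldots,c_{i,s})$ with $c_{i,j}\in R$; ${\rm rk}(\mathbf{u})$ is the number of nonzero diagonal entries in the Smith normal form of the matrix $(c_{i,j})\in R^{m\times s}$ (independent of the basis). *)

(* Defs.v *)
From HB Require Import structures.
From mathcomp Require Import all_boot all_order all_algebra.
Set Implicit Arguments.
Unset Strict Implicit.
Unset Printing Implicit Defensive.
Import GRing.Theory.
Local Open Scope ring_scope.

(* principal ideals (hence all ideals) of R are totally ordered by inclusion *)
Definition chain_ring (R : finComUnitRingType) : Prop :=
  forall x y : R, (exists r, x = r * y) \/ (exists r, y = r * x).

(* the maximal ideal of a local ring = its set of non-units *)
Definition in_max_ideal (R : comUnitRingType) (x : R) : bool :=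
  x \isn't a GRing.unit.

Definition residue_card (R : finComUnitRingType) : nat :=
  (#|R| %/ #|[set x : R | in_max_ideal x]|)%N.

Definition const_mod_m (R : comUnitRingType) (f : {poly R}) : Prop :=
  forall k, (0 < k)%N -> in_max_ideal f`_k.
Definition irreducible_mod_m (R : comUnitRingType) (h : {poly R}) : Prop :=
  ~ const_mod_m h /\
  forall f g : {poly R}, (forall k, in_max_ideal (h - f * g)`_k) ->
    const_mod_m f \/ const_mod_m g.

Section Skew.
Variables (S : comUnitRingType) (sigma : S -> S).

Definition normN (i : nat) (a : S) : S := \prod_(k < i) iter k sigma a.
Definition Dop (a : S) (i : nat) (b : S) : S := iter i sigma b * normN i a.
(* F_a(beta) = sum_i F_i D_a^i(beta), F = sum_i F_i x^i given by its coefficients *)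
Definition skew_eval (F : {poly S}) (a b : S) : S :=
  \sum_(i < size F) F`_i * Dop a i b.
Definition conj_act (a b : S) : S := sigma b * a * b^-1.
End Skew.

Section Rank.
Variable R : comUnitRingType.

Definition mx_diag_at m s (D : 'M[R]_(m, s)) (k : nat) : R :=
  odflt 0 (obind (fun i : 'I_m => omap (fun j : 'I_s => D i j) (insub k)) (insub k)).

Definition dvdr_ (a b : R) : Prop := exists c, b = c * a.

Definition smith_form m s (D : 'M[R]_(m, s)) : Prop :=
  (forall (i : 'I_m) (j : 'I_s), (i : nat) != j -> D i j = 0) /\
  (forall k, (k.+1 < minn m s)%N -> dvdr_ (mx_diag_at D k) (mx_diag_at D k.+1)).

Definition nonzero_diag m s (D : 'M[R]_(m, s)) : nat :=
  #|[set k : 'I_(minn m s) | mx_diag_at D k != 0]|.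

(* rk(u) = t, computed w.r.t. the R-basis 1, theta, ..., theta^(m-1) of S:
   C is the coordinate matrix (C i j = coefficient of theta^i in u_j) and
   D = P C Q is a Smith normal form of C with t nonzero diagonal entries. *)
Definition is_rank (S : nzRingType) (iota : R -> S) (theta : S) (m s : nat)
    (u : 'I_s -> S) (t : nat) : Prop :=
  exists C : 'M[R]_(m, s),
    (forall j, u j = \sum_(i < m) iota (C i j) * theta ^+ i) /\
    exists (P : 'M[R]_m) (Q : 'M[R]_s) (D : 'M[R]_(m, s)),
      [/\ P \in unitmx, Q \in unitmx, D = P *m C *m Q, smith_form D
        & nonzero_diag D = t].
End Rank.

(* Main.v *)
From HB Require Import structures.
From mathcomp Require Import all_boot all_order all_algebra.
Require Import Defs.
From mathcomp Require Import ring.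
Set Implicit Arguments. Unset Strict Implicit. Unset Printing Implicit Defensive.
Import GRing.Theory.
Local Open Scope ring_scope.
Local Open Scope quotient_scope.

Section Res.
Variable R : comUnitRingType.
Hypothesis hR : forall x y : R, (exists r, x = r * y) \/ (exists r, y = r * x).

Definition mpred : {pred R} := fun x => x \isn't a GRing.unit.

Lemma mpredE x : (x \in mpred) = (x \isn't a GRing.unit).
Proof. by []. Qed.

Lemma mpredD x y : x \in mpred -> y \in mpred -> x + y \in mpred.
Proof.
rewrite !mpredE => /negP hx /negP hy; apply/negP => hu.
case: (hR x y) => [[r hr]|[r hr]]; rewrite hr in hu.
  by apply: hy; move: hu; rewrite -{2}[y]mul1r -mulrDl unitrM => /andP[].
by apply: hx; move: hu; rewrite -{1}[x]mul1r -mulrDl unitrM => /andP[].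
Qed.

Lemma mpred_closed : idealr_closed mpred.
Proof.
split; first by rewrite mpredE unitr0.
  by rewrite mpredE unitr1.
move=> a u v hu hv; apply: mpredD => //.
by move: hu; rewrite !mpredE unitrM; apply: contra => /andP[].
Qed.

HB.instance Definition _ := isIdealr.Build R mpred mpred_closed.

Definition kq := {ideal_quot (mpred : idealr R)}.
HB.instance Definition _ := GRing.ComNzRing.on kq.
HB.instance Definition _ := Quotient.on kq.
Definition kinv (x : kq) : kq := \pi_kq ((repr x)^-1).

Lemma pi_eq0 (x : R) : (\pi_kq x == 0) = (x \in mpred).
Proof. by rewrite -(rmorph0 (\pi_kq)) -Quotient.idealrBE subr0. Qed.

Lemma kmulVf (x : kq) : x != 0 -> kinv x * x = 1.
Proof.
rewrite /kinv; have := reprK x; move: (repr x) => r <-.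
rewrite pi_eq0 mpredE negbK => hu.
rewrite -rmorphM mulVr //; exact: rmorph1.
Qed.

Lemma kinv0 : kinv 0 = 0.
Proof.
by apply/eqP; rewrite /kinv pi_eq0 mpredE unitrV -mpredE -pi_eq0 reprK.
Qed.

HB.instance Definition _ := GRing.ComNzRing_isField.Build kq kmulVf kinv0.

End Res.
Section SkewLemmas.
Variables (S : comUnitRingType) (sigma : {rmorphism S -> S}).

Lemma iterM k (x y : S) : iter k sigma (x * y) = iter k sigma x * iter k sigma y.
Proof. by elim: k => //= k ->; rewrite rmorphM. Qed.
Lemma iterD k (x y : S) : iter k sigma (x + y) = iter k sigma x + iter k sigma y.
Proof. by elim: k => //= k ->; rewrite rmorphD. Qed.
Lemma iterN k (x : S) : iter k sigma (- x) = - iter k sigma x.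
Proof. by elim: k => //= k ->; rewrite rmorphN. Qed.
Lemma iter0 k : iter k sigma (0 : S) = 0.
Proof. by elim: k => //= k ->; rewrite rmorph0. Qed.

Lemma DopD a i x y : Dop sigma a i (x + y) = Dop sigma a i x + Dop sigma a i y.
Proof. by rewrite /Dop iterD mulrDl. Qed.
Lemma DopM a i c x : Dop sigma a i (c * x) = iter i sigma c * Dop sigma a i x.
Proof. by rewrite /Dop iterM mulrA. Qed.
Lemma DopN a i x : Dop sigma a i (- x) = - Dop sigma a i x.
Proof. by rewrite /Dop iterN mulNr. Qed.
Lemma DopS a i x : Dop sigma a i.+1 x = Dop sigma a i (sigma x * a).
Proof.
rewrite /Dop /normN big_ord_recr /= iterM -iterSr.
by rewrite -mulrA [_ * iter i sigma a]mulrC.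
Qed.

Lemma skew_eval_wide (F : {poly S}) (a b : S) n : (size F <= n)%N ->
  skew_eval sigma F a b = \sum_(i < n) F`_i * Dop sigma a i b.
Proof.
move=> hn; rewrite /skew_eval (big_ord_widen n (fun i => F`_i * Dop sigma a i b) hn).
rewrite big_mkcond /=; apply: eq_bigr => i _.
by case: ifP => // /negbT; rewrite -leqNgt => /(nth_default 0) ->; rewrite mul0r.
Qed.

Lemma skew_evalD (F : {poly S}) (a x y : S) :
  skew_eval sigma F a (x + y) = skew_eval sigma F a x + skew_eval sigma F a y.
Proof. by rewrite /skew_eval -big_split /=; apply: eq_bigr => i _; rewrite DopD mulrDr. Qed.
Lemma skew_evalN (F : {poly S}) (a x : S) : skew_eval sigma F a (- x) = - skew_eval sigma F a x.
Proof. by rewrite /skew_eval -sumrN; apply: eq_bigr => i _; rewrite DopN mulrN. Qed.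
Lemma skew_eval0 (F : {poly S}) (a : S) : skew_eval sigma F a 0 = 0.
Proof. by rewrite /skew_eval big1 // => i _; rewrite /Dop iter0 mul0r mulr0. Qed.
Lemma skew_evalZ (F : {poly S}) (a c x : S) : (forall k, iter k sigma c = c) ->
  skew_eval sigma F a (c * x) = c * skew_eval sigma F a x.
Proof.
move=> hc; rewrite /skew_eval mulr_sumr; apply: eq_bigr => i _.
by rewrite DopM hc mulrCA.
Qed.

Definition mulXc (G : {poly S}) (c : S) : {poly S} :=
  G * 'X - \poly_(i < size G) (G`_i * iter i sigma c).

Lemma skew_mulXc (G : {poly S}) (c a b : S) :
  skew_eval sigma (mulXc G c) a b = skew_eval sigma G a (sigma b * a - c * b).
Proof.
have hs : (size (mulXc G c) <= (size G).+1)%N.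
  rewrite /mulXc (leq_trans (size_polyD _ _)) // geq_max size_polyN.
  rewrite (leq_trans (size_poly _ _)) // andbT.
  have [->|G0] := eqVneq G 0; first by rewrite mul0r size_poly0.
  by rewrite size_mulX.
rewrite (skew_eval_wide a b hs) /skew_eval.
under eq_bigr do rewrite coefB coefMX coef_poly mulrBl.
rewrite sumrB big_ord_recl /= mul0r add0r big_ord_recr /= ltnn mul0r addr0.
rewrite -sumrB; apply: eq_bigr => i _.
by rewrite DopD DopN -DopS (DopM _ _ c) add0n /bump /= add1n ltn_ord mulrBr !mulrA.
Qed.

Lemma monic_mulXc (G : {poly S}) (c : S) : G \is monic -> (mulXc G c \is monic) /\ size (mulXc G c) = (size G).+1.
Proof.
move=> mG; have G0 : G != 0 by apply: monic_neq0.
rewrite /mulXc; set P := \poly_(_ < _) _.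
have hlt : (size (- P) < size (G * 'X)%R)%N.
  by rewrite size_polyN size_mulX // ltnS size_poly.
split; first by rewrite monicE lead_coefDl // lead_coefMX (eqP mG).
by rewrite size_addl // size_mulX.
Qed.

Lemma core (L : seq (S * S))
  (Hdiv : forall a w : S, exists c, sigma w * a = c * w) :
  exists F : {poly S}, [/\ F \is monic, size F = (size L).+1 &
    forall p, p \in L -> skew_eval sigma F p.1 p.2 = 0].
Proof.
move: {2}(size L) (erefl (size L)) => n; elim: n L => [|n IH] [|[a w] L] //= hn.
  by exists 1; split => //; [exact: monic1 | rewrite size_poly1].
have [c hc] := Hdiv a w.
pose L' := [seq (p.1, sigma p.2 * p.1 - c * p.2) | p <- L].
have hL' : size L' = n by rewrite size_map; case: hn.
have [G [mG sG hG]] := IH L' hL'.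
have [mF sF] := monic_mulXc c mG.
exists (mulXc G c); split => //; first by rewrite sF sG size_map.
move=> p; rewrite inE => /orP[/eqP -> /=|hp].
  by rewrite skew_mulXc hc subrr skew_eval0.
rewrite skew_mulXc; apply: (hG (p.1, sigma p.2 * p.1 - c * p.2)).
by apply/mapP; exists p.
Qed.
End SkewLemmas.

Section Main.
Variables (R : finComUnitRingType) (hR : chain_ring R) (m : nat) (h : {poly R}).
Hypotheses (hh_monic : h \is monic) (hh_size : size h = m.+1)
  (hh_irr : irreducible_mod_m h).
Variables (S : finComUnitRingType) (iota : {rmorphism R -> S}) (theta : S).
Hypothesis hS_basis : forall s : S, exists! c : 'rV[R]_m,
      s = \sum_(i < m) iota (c 0 i) * theta ^+ i.
Hypothesis hS_root : (map_poly iota h).[theta] = 0.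

Local Notation K := (kq hR).
Local Notation pi := (\pi_(kq hR)).

Lemma m_gt0 : (0 < m)%N.
Proof.
rewrite lt0n; apply/negP => /eqP m0.
have [c [h1 _]] := hS_basis 1; move: h1; rewrite big1 => [/eqP|].
  by rewrite oner_eq0.
by move=> [i hi] _; exfalso; move: hi; rewrite m0.
Qed.

Lemma coord_uniq (f g : 'I_m -> R) :
  \sum_i iota (f i) * theta ^+ i = \sum_i iota (g i) * theta ^+ i ->
  forall i, f i = g i.
Proof.
move=> e i; have [c [_ hu]] := hS_basis (\sum_i iota (f i) * theta ^+ i).
have e1 := hu (\row_j f j); have e2 := hu (\row_j g j).
have : (\row_j f j) = (\row_j g j) :> 'rV_m.
  rewrite -e1 ?e2 //; first by rewrite e; apply: eq_bigr => j _; rewrite mxE.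
  by apply: eq_bigr => j _; rewrite mxE.
by move/(congr1 (fun M : 'rV_m => M 0 i)); rewrite !mxE.
Qed.

Lemma evE (p : {poly R}) : (size p <= m)%N ->
  (map_poly iota p).[theta] = \sum_(i < m) iota p`_i * theta ^+ i.
Proof.
move=> hp; rewrite (horner_coef_wide (n:=m)).
  by apply: eq_bigr => i _; rewrite coef_map.
by rewrite /map_poly (leq_trans (size_poly _ _)).
Qed.

Definition polyOf (f : 'I_m -> R) : {poly R} := \sum_(i < m) (f i)%:P * 'X^i.

Lemma coef_polyOf f (i : 'I_m) : (polyOf f)`_i = f i.
Proof.
rewrite /polyOf coef_sum (bigD1 i) //= coefCM coefXn eqxx mulr1 big1 ?addr0 //.
move=> j hj; rewrite coefCM coefXn (_ : (i == j :> nat) = false) ?mulr0 //.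
by apply/negbTE; rewrite eq_sym.
Qed.

Lemma size_polyOf f : (size (polyOf f) <= m)%N.
Proof.
rewrite /polyOf; apply: (big_ind (fun p : {poly R} => size p <= m)%N) => //.
- by rewrite size_poly0.
- by move=> p q hp hq; rewrite (leq_trans (size_polyD _ _)) // geq_max hp.
move=> i _; rewrite mul_polyC (leq_trans (size_scale_leq _ _)) //.
by rewrite size_polyXn.
Qed.

Lemma ev_polyOf f :
  (map_poly iota (polyOf f)).[theta] = \sum_(i < m) iota (f i) * theta ^+ i.
Proof. by rewrite evE ?size_polyOf //; apply: eq_bigr => i _; rewrite coef_polyOf. Qed.

Lemma chain_seq (s : seq R) x0 : exists2 d, d \in x0 :: s &
  forall y, y \in x0 :: s -> exists x, y = x * d.
Proof.
elim: s x0 => [|z s IH] x0.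
  exists x0; first by rewrite mem_head.
  by move=> y; rewrite inE => /eqP ->; exists 1; rewrite mul1r.
have [d hd hall] := IH x0.
case: (hR z d) => [[r hr]|[r hr]].
- exists d; first by move: hd; rewrite !inE => /orP[->|->]; rewrite ?orbT.
  move=> y; rewrite !inE => /orP[/eqP->|/orP[/eqP->|hy]].
  + by apply: hall; rewrite mem_head.
  + by exists r.
  + by apply: hall; rewrite inE hy orbT.
- exists z; first by rewrite !inE eqxx orbT.
  move=> y; rewrite !inE => /orP[/eqP->|/orP[/eqP->|hy]].
  + have [x ->] := hall x0 (mem_head _ _); by exists (x * r); rewrite hr mulrA.
  + by exists 1; rewrite mul1r.
  + have [x ->] : exists x, y = x * d by apply: hall; rewrite inE hy orbT.
    by exists (x * r); rewrite hr mulrA.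
Qed.

Lemma chain_div (f : 'I_m -> R) : exists i0, forall i, exists x, f i = x * f i0.
Proof.
pose i00 := Ordinal m_gt0.
have [d hd hall] := chain_seq (map f (enum 'I_m)) (f i00).
have [i0 hd0] : exists i0, d = f i0.
  by move: hd; rewrite inE => /orP[/eqP->|/mapP[i _ ->]]; eexists.
rewrite hd0 in hall.
by exists i0 => i; apply: hall; rewrite inE map_f ?mem_enum ?orbT.
Qed.

Lemma factor (w : S) : exists d : R, exists r : 'I_m -> R, exists i0,
  r i0 = 1 /\ w = iota d * \sum_i iota (r i) * theta ^+ i.
Proof.
have [c [hc _]] := hS_basis w.
have [i0 hi0] := chain_div (fun i => c 0 i).
have [x hx] := fin_all_exists hi0.
exists (c 0 i0), (fun i => if i == i0 then 1 else x i), i0; split.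
  by rewrite eqxx.
rewrite hc mulr_sumr; apply: eq_bigr => i _; rewrite mulrA -rmorphM.
congr (iota _ * _).
by case: eqP => [->|_]; [rewrite mulr1 | rewrite (hx i) mulrC].
Qed.

Definition liftp (p : {poly K}) : {poly R} := \poly_(i < size p) repr p`_i.

Lemma liftpK p : map_poly pi (liftp p) = p.
Proof.
apply/polyP => i; rewrite coef_map coef_poly; case: ltnP => hi.
  exact: reprK.
by rewrite nth_default //; exact: rmorph0.
Qed.

Lemma const_size (p : {poly K}) : (forall k, (0 < k)%N -> p`_k = 0) ->
  (size p <= 1)%N.
Proof.
move=> hp; have -> : p = (p`_0)%:P.
  by apply/polyP => [[|k]]; rewrite coefC //=; apply: hp.
by rewrite size_polyC leq_b1.
Qed.

Lemma constm_size (p : {poly R}) : const_mod_m p -> (size (map_poly pi p) <= 1)%N.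
Proof.
move=> hp; apply: const_size => k hk; rewrite coef_map; apply/eqP.
by rewrite pi_eq0 mpredE; exact: hp k hk.
Qed.

Lemma size_hbar : size (map_poly pi h) = m.+1.
Proof. by rewrite size_map_poly_id0 // (monicP hh_monic) rmorph1 oner_neq0. Qed.

Lemma h_irr : irreducible_poly (map_poly pi h).
Proof.
split; first by rewrite size_hbar ltnS m_gt0.
move=> q sq dq; set hb := map_poly pi h in dq *.
have hb0 : hb != 0 by rewrite -size_poly_eq0 size_hbar.
have e := divpK dq.
have hm : forall k, in_max_ideal (h - liftp (hb %/ q) * liftp q)`_k.
  move=> k; rewrite /in_max_ideal -mpredE -(pi_eq0 hR) -coef_map.
  by rewrite rmorphB rmorphM /= !liftpK e subrr coef0.
case: (hh_irr.2 _ _ hm) => /constm_size; rewrite liftpK => hs.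
  have hc := size1_polyC hs; set c := _`_0 in hc.
  have c0 : c != 0 by apply: contraNneq hb0 => c0; rewrite -e hc c0 mul0r.
  by rewrite -e hc mul_polyC eqp_sym eqp_scale.
have : size q = 0%N by move: hs sq; case: (size q) => [|[|]].
move/eqP; rewrite size_poly_eq0 => /eqP q0.
by move: hb0; rewrite -e q0 mulr0 eqxx.
Qed.

Lemma unit_coord (r : 'I_m -> R) i0 : r i0 = 1 ->
  \sum_i iota (r i) * theta ^+ i \is a GRing.unit.
Proof.
move=> hr0; set y := \sum_i _.
apply/negPn/negP => /negP hy.
have : ~~ injectiveb (fun z : S => y * z).
  apply/negP => /injectiveP /injF_bij [g hg1 hg2]; apply: hy; apply/unitrP.
  by exists (g 1); rewrite mulrC hg2.
case/injectivePn => z1 [z2 hz hzz].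
set z := z1 - z2.
have z0 : z != 0 by rewrite subr_eq0.
have yz : y * z = 0 by rewrite mulrBr hzz subrr.
have [d [e [j0 [he hze]]]] := factor z.
have d0 : d != 0.
  by apply/eqP => d0; move/eqP: z0; apply; rewrite hze d0 rmorph0 mul0r.
set g := polyOf r; set f := polyOf e.
set Rm := Pdiv.CommonRing.rmodp (g * f) h.
have hdiv := Pdiv.RingMonic.rdivp_eq hh_monic (g * f).
have sRm : (size Rm <= m)%N.
  by rewrite -ltnS -hh_size Pdiv.CommonRing.ltn_rmodp monic_neq0.
have evgf : (map_poly iota Rm).[theta] = y * \sum_i iota (e i) * theta ^+ i.
  have := congr1 (fun p => (map_poly iota p).[theta]) hdiv.
  rewrite /= rmorphM hornerM !ev_polyOf rmorphD rmorphM.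
  rewrite /= hornerD hornerM hS_root mulr0 add0r => e1.
  by rewrite /y e1.
have hcoef : forall i : 'I_m, d * Rm`_i = 0.
  apply: (coord_uniq (f := fun i => d * Rm`_i) (g := fun _ => 0)).
  transitivity (iota d * (map_poly iota Rm).[theta]).
    by rewrite evE // mulr_sumr; apply: eq_bigr => i _; rewrite rmorphM mulrA.
  rewrite evgf mulrCA -hze yz big1 // => i _.
  by rewrite rmorph0 mul0r.
have Rm_m : forall k, Rm`_k \in @mpred R.
  move=> k; case: (ltnP k m) => hk.
    rewrite mpredE; apply/negP => hu.
    have := hcoef (Ordinal hk); move/(congr1 (fun x => x * (Rm`_k)^-1)).
    rewrite -mulrA mulrV // mulr1 mul0r => /= hd.
    by rewrite hd eqxx in d0.
  by rewrite nth_default ?(leq_trans sRm hk) // mpredE unitr0.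
have Rm0 : map_poly pi Rm = 0.
  by apply/polyP => k; rewrite coef_map coef0; apply/eqP; rewrite pi_eq0.
have hdvd : map_poly pi h %| map_poly pi g * map_poly pi f.
  have := congr1 (map_poly pi) hdiv.
  rewrite rmorphD rmorphM rmorphM /= Rm0 addr0 => ->.
  exact: dvdp_mulIr.
have gb0 : map_poly pi g != 0.
  apply/eqP => /(congr1 (fun p : {poly K} => p`_i0)).
  by rewrite coef_map coef_polyOf hr0 coef0 => /eqP; rewrite pi_eq0 mpredE unitr1.
have fb0 : map_poly pi f != 0.
  apply/eqP => /(congr1 (fun p : {poly K} => p`_j0)).
  by rewrite coef_map coef_polyOf he coef0 => /eqP; rewrite pi_eq0 mpredE unitr1.
have sg : (size (map_poly pi g) <= m)%N.
  by rewrite /map_poly (leq_trans (size_poly _ _)) // size_polyOf.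
have sf : (size (map_poly pi f) <= m)%N.
  by rewrite /map_poly (leq_trans (size_poly _ _)) // size_polyOf.
have irr := h_irr.
case: (boolP (coprimep (map_poly pi h) (map_poly pi g))) => cop.
  rewrite (Gauss_dvdpr _ cop) in hdvd.
  have := dvdp_leq fb0 hdvd; rewrite size_hbar => /leq_trans /(_ sf).
  by rewrite ltnn.
case: (irredp_XsubCP irr (dvdp_gcdl (map_poly pi h) (map_poly pi g))) => hG.
  by move: cop; rewrite coprimep_def (eqp_size hG) size_poly1 eqxx.
have : map_poly pi h %| map_poly pi g by rewrite -(eqp_dvdl _ hG) dvdp_gcdr.
move/(dvdp_leq gb0); rewrite size_hbar => /leq_trans /(_ sg).
by rewrite ltnn.
Qed.

Lemma Hdiv (sigma : {rmorphism S -> S}) (hfix : forall r, sigma (iota r) = iota r) :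
  forall a w : S, exists c, sigma w * a = c * w.
Proof.
move=> a w; have [d [r [i0 [hr hw]]]] := factor w.
set y := \sum_i _ in hw.
have hu : y \is a GRing.unit := unit_coord hr.
exists (sigma y * y^-1 * a).
rewrite hw rmorphM hfix.
transitivity (iota d * sigma y * a * (y^-1 * y)); first by rewrite mulVr // mulr1.
ring.
Qed.

End Main.

Lemma mx_diag_atE (R : comUnitRingType) m s (D : 'M[R]_(m, s)) (i : 'I_m) (j : 'I_s) :
  forall k : nat, (i : nat) = k -> (j : nat) = k -> mx_diag_at D k = D i j.
Proof.
move=> k <- hij; rewrite /mx_diag_at valK /= -hij valK /=.
by congr (D _ _); apply: val_inj.
Qed.

Lemma block (R : finComUnitRingType) (S : finComUnitRingType) (iota : {rmorphism R -> S})
  (theta : S) m s (u : 'I_s -> S) (t : nat) :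
  is_rank iota theta m u t -> exists gens : seq S, size gens = t /\
  forall (sigma : {rmorphism S -> S}) (F : {poly S}) (a : S),
    (forall r, sigma (iota r) = iota r) ->
    (forall v, v \in gens -> skew_eval sigma F a v = 0) ->
    forall j, skew_eval sigma F a (u j) = 0.
Proof.
case=> C [hC [P [Q [D [hP hQ hD hsm ht]]]]].
pose PD := invmx P *m D.
pose v (k : 'I_s) := \sum_(i < m) iota (PD i k) * theta ^+ i.
exists [seq v (widen_ord (geq_minr m s) k) |
         k <- enum [set k : 'I_(minn m s) | mx_diag_at D k != 0]].
split; first by rewrite size_map -cardE.
move=> sigma F a hfix hv.
have hfixk : forall k r, iter k sigma (iota r) = iota r.
  by move=> k r; elim: k => //= k ->; rewrite hfix.
have vk0 : forall k, (forall l : 'I_m, D l k = 0) -> v k = 0.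
  move=> k hD0; rewrite /v big1 // => i _.
  by rewrite /PD mxE big1 ?rmorph0 ?mul0r // => l _; rewrite hD0 mulr0.
have hZ : forall k, skew_eval sigma F a (v k) = 0.
  move=> k; case: (ltnP k (minn m s)) => hk.
    set k' := Ordinal hk.
    case: (boolP (mx_diag_at D k' != 0)) => hd.
      apply: hv; apply/mapP; exists k'; first by rewrite mem_enum inE.
      by congr v; apply: val_inj.
    rewrite vk0 ?skew_eval0 // => l.
    case: (eqVneq (l : nat) k) => hl; last by apply: hsm.1.
    have e : mx_diag_at D k' = D l k by apply: mx_diag_atE.
    by rewrite -e; apply/eqP; move/negPn: hd.
  rewrite vk0 ?skew_eval0 // => l; apply: hsm.1.
  apply/negP => /eqP hl; have := ltn_ord l; rewrite hl => hlm.
  move: hk; rewrite geq_min => /orP [] hh.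
    by have := leq_ltn_trans hh hlm; rewrite ltnn.
  by have := leq_ltn_trans hh (ltn_ord k); rewrite ltnn.
have hCe : C = PD *m invmx Q.
  by rewrite /PD hD !mulmxA mulmxK // mulVmx // mul1mx.
move=> j.
have -> : u j = \sum_k iota (invmx Q k j) * v k.
  rewrite hC hCe.
  under eq_bigr do rewrite mxE rmorph_sum mulr_suml.
  rewrite exchange_big /=; apply: eq_bigr => k _; rewrite mulr_sumr.
  by apply: eq_bigr => i _; rewrite rmorphM -mulrA mulrCA.
apply: (big_ind (fun x => skew_eval sigma F a x = 0)).
- exact: skew_eval0.
- by move=> x y hx hy; rewrite skew_evalD hx hy addr0.
by move=> k _; rewrite skew_evalZ ?hZ ?mulr0.
Qed.

Local Close Scope quotient_scope.

Theorem corollary3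
  (R : finComUnitRingType) (hR : chain_ring R)
  (m : nat) (h : {poly R})
  (hh_monic : h \is monic) (hh_size : size h = m.+1)
  (hh_irr : irreducible_mod_m h)
  (S : finComUnitRingType) (iota : {rmorphism R -> S}) (theta : S)
  (hS_basis : forall s : S, exists! c : 'rV[R]_m,
      s = \sum_(i < m) iota (c 0 i) * theta ^+ i)
  (hS_root : (map_poly iota h).[theta] = 0)
  (sigma : {rmorphism S -> S}) (hsigma_bij : bijective sigma)
  (hsigma_fix : forall s : S, sigma s = s <-> exists r : R, s = iota r)
  (hsigma_gen : forall tau : {rmorphism S -> S}, bijective tau ->
      (forall r : R, tau (iota r) = iota r) ->
      exists k : nat, forall s : S, tau s = iter k sigma s)
  (hsigma_frob : forall y : S,
      in_max_ideal (sigma y - y ^+ residue_card R))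
  (l : nat) (a : 'I_l -> S)
  (ha : forall (i j : 'I_l) (beta : S), (i < j)%N ->
      beta \is a GRing.unit -> a i - conj_act sigma (a j) beta \is a GRing.unit)
  (n : 'I_l -> nat) (u : forall i : 'I_l, 'I_(n i) -> S) (t : 'I_l -> nat)
  (ht : forall i : 'I_l, is_rank iota theta m (u i) (t i)) :
  exists F : {poly S},
    [/\ F \is monic, size F = (\sum_(i < l) t i).+1
      & forall (i : 'I_l) (j : 'I_(n i)), skew_eval sigma F (a i) (u i j) = 0].
Proof.
have hfix : forall r, sigma (iota r) = iota r.
  by move=> r; apply/(hsigma_fix (iota r)).2; exists r.
have hdiv := @Hdiv R hR m h hh_monic hh_size hh_irr S iota theta hS_basis hS_root sigma hfix.
have hL : forall I : seq 'I_l, exists L : seq (S * S),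
    size L = (\sum_(i <- I) t i)%N /\
    forall i, i \in I -> forall F : {poly S},
      (forall p, p \in L -> skew_eval sigma F p.1 p.2 = 0) ->
      forall j, skew_eval sigma F (a i) (u i j) = 0.
  elim => [|i I [L [hs hL]]]; first by exists [::]; rewrite big_nil.
  have [gens [hg hgv]] := block (ht i).
  exists ([seq (a i, v) | v <- gens] ++ L); split.
    by rewrite size_cat size_map hg hs big_cons.
  move=> i'; rewrite inE => /orP [/eqP -> | hi'] F hF.
    apply: (hgv sigma F (a i) hfix) => v hv; apply: (hF (a i, v)).
    by rewrite mem_cat map_f.
  by apply: (hL i' hi') => p hp; apply: hF; rewrite mem_cat hp orbT.
have [L [hs hLu]] := hL (index_enum 'I_l).
have [F [mF sF hF]] := core L hdiv.
exists F; split => //; first by rewrite sF hs.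
by move=> i j; apply: (hLu i) => //; rewrite mem_index_enum.
Qed.
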